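(* For the system $\dot n^x=P(n^x,n^y)$, $\dot n^y=Q(n^x,n^y)$, the set of stationary points in the open quadrant $(0,\infty)^2$ is either infinite (a curve of fixed points) or finite, and in the finite case it has: at most $3$ points if $\beta\ne0$ and $\mu\ne0$; at most $2$ points if $\beta=0,\mu=1$; at most $1$ point if $\beta=1,\mu=0$.
   Context: Let $r(x),r(y)>0$, $C(u,v)>0$ for $u,v\in\{x,y\}$, $\alpha(x,y)\in\mathbb R$, and $\beta,\mu\ge0$ with $\beta+\mu>0$. Define $$P(u,v)=\Big(r(x)-C(x,x)u-C(x,y)v+\frac{\alpha(x,y)}{\beta+\mu(u+v)}v\Big)u,\qquad Q(u,v)=\Big(r(y)-C(y,x)u-C(y,y)v-\frac{\alpha(x,y)}{\beta+\mu(u+v)}u\Big)v.$$ *)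

(* Defs.v *)
From Stdlib Require Import Reals Ensembles Finite_sets.
Open Scope R_scope.

(* Right-hand sides of the two-species system, parameters
   rx = r(x), ry = r(y), Cxx = C(x,x), Cxy = C(x,y), Cyx = C(y,x),
   Cyy = C(y,y), a = alpha(x,y). *)
Definition Pf (rx Cxx Cxy a beta mu : R) (u v : R) : R :=
  (rx - Cxx * u - Cxy * v + a / (beta + mu * (u + v)) * v) * u.

Definition Qf (ry Cyx Cyy a beta mu : R) (u v : R) : R :=
  (ry - Cyx * u - Cyy * v - a / (beta + mu * (u + v)) * u) * v.

Definition stationary_set (rx ry Cxx Cxy Cyx Cyy a beta mu : R) : Ensemble (R * R) :=
  fun p => 0 < fst p /\ 0 < snd p /\
           Pf rx Cxx Cxy a beta mu (fst p) (snd p) = 0 /\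
           Qf ry Cyx Cyy a beta mu (fst p) (snd p) = 0.

(* Main.v *)
Require Import Defs.
From Stdlib Require Import Reals Ensembles Finite_sets Finite_sets_facts List Lra Lia Psatz Classical Arith.
Open Scope R_scope.

Lemma card_list {U} (E : Ensemble U) n : cardinal U E n ->
  exists l, NoDup l /\ length l = n /\ forall x, List.In x l -> Ensembles.In U E x.
Proof.
  induction 1 as [|A m HA IH x Hx].
  - exists nil; split; [constructor|split; [reflexivity| simpl; tauto]].
  - destruct IH as [l [Hl [Hlen Hin]]].
    exists (x :: l); split; [|split].
    + constructor; auto.
    + simpl; lia.
    + intros y [<-|Hy].
      * apply Union_intror; constructor.
      * apply Union_introl; auto.
Qed.

Lemma nodup_le_card {U} (l : list U) : forall (E : Ensemble U) n, cardinal U E n ->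
  NoDup l -> (forall x, List.In x l -> Ensembles.In U E x) -> (length l <= n)%nat.
Proof.
  induction l as [|y l IH]; intros E n Hc Hnd Hin; simpl; [lia|].
  apply NoDup_cons_iff in Hnd as [Hy Hnd].
  assert (HyE : Ensembles.In U E y) by (apply Hin; simpl; auto).
  pose proof (card_soustr_1 U E n Hc y HyE) as Hc'.
  assert (n <> 0%nat).
  { intro; subst. apply cardinalO_empty in Hc; subst. destruct HyE. }
  assert (length l <= Nat.pred n)%nat; [|lia].
  apply (IH _ _ Hc' Hnd). intros z Hz. split.
  - apply Hin; simpl; auto.
  - intro Hs; inversion Hs; subst; contradiction.
Qed.

Lemma map_inj_on {A B} (f : A -> B) (l : list A) :
  NoDup l -> (forall x y, List.In x l -> List.In y l -> f x = f y -> x = y) -> NoDup (map f l).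
Proof.
  induction l as [|x l IH]; intros Hnd Hinj; simpl; [constructor|].
  apply NoDup_cons_iff in Hnd as [Hx Hnd]. constructor.
  - intro H. apply in_map_iff in H as [y [Hy Hyl]].
    apply Hx. rewrite (Hinj x y); simpl; auto.
  - apply IH; auto. intros; apply Hinj; simpl; auto.
Qed.

Lemma cancel_diff x y E : x <> y -> (x - y) * E = 0 -> E = 0.
Proof.
  intros Hxy H. apply Rmult_integral in H as [H|H]; auto. exfalso; apply Hxy; lra.
Qed.

Lemma cubic_roots g0 g1 g2 g3 (l : list R) : NoDup l -> (4 <= length l)%nat ->
  (forall t, List.In t l -> g0 + g1*t + g2*t*t + g3*t*t*t = 0) ->
  forall t, g0 + g1*t + g2*t*t + g3*t*t*t = 0.
Proof.
  intros Hnd Hlen Hr.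
  destruct l as [|t1 [|t2 [|t3 [|t4 l]]]]; simpl in Hlen; try lia.
  assert (r1 := Hr t1 ltac:(simpl; auto)).
  assert (r2 := Hr t2 ltac:(simpl; auto)).
  assert (r3 := Hr t3 ltac:(simpl; auto)).
  assert (r4 := Hr t4 ltac:(simpl; auto)).
  apply NoDup_cons_iff in Hnd as [n1 Hnd]; apply NoDup_cons_iff in Hnd as [n2 Hnd];
  apply NoDup_cons_iff in Hnd as [n3 Hnd].
  assert (d12 : t1 <> t2) by (intro; subst; apply n1; simpl; auto).
  assert (d13 : t1 <> t3) by (intro; subst; apply n1; simpl; auto).
  assert (d14 : t1 <> t4) by (intro; subst; apply n1; simpl; auto).
  assert (d23 : t2 <> t3) by (intro; subst; apply n2; simpl; auto).
  assert (d24 : t2 <> t4) by (intro; subst; apply n2; simpl; auto).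
  assert (d34 : t3 <> t4) by (intro; subst; apply n3; simpl; auto).
  assert (h12 : g1 + g2*(t1+t2) + g3*(t1*t1+t1*t2+t2*t2) = 0).
  { apply (cancel_diff t1 t2); auto. nra. }
  assert (h13 : g1 + g2*(t1+t3) + g3*(t1*t1+t1*t3+t3*t3) = 0).
  { apply (cancel_diff t1 t3); auto. nra. }
  assert (h14 : g1 + g2*(t1+t4) + g3*(t1*t1+t1*t4+t4*t4) = 0).
  { apply (cancel_diff t1 t4); auto. nra. }
  assert (h123 : g2 + g3*(t1+t2+t3) = 0).
  { apply (cancel_diff t2 t3); auto. nra. }
  assert (h124 : g2 + g3*(t1+t2+t4) = 0).
  { apply (cancel_diff t2 t4); auto. nra. }
  assert (e3 : g3 = 0) by (apply (cancel_diff t3 t4); auto; nra).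
  subst g3. assert (g2 = 0) by lra. subst g2. assert (g1 = 0) by lra. subst g1.
  intro; nra.
Qed.

Lemma quad_roots g0 g1 g2 (l : list R) : NoDup l -> (3 <= length l)%nat ->
  (forall t, List.In t l -> g0 + g1*t + g2*t*t = 0) ->
  forall t, g0 + g1*t + g2*t*t = 0.
Proof.
  intros Hnd Hlen Hr.
  destruct l as [|t1 [|t2 [|t3 l]]]; simpl in Hlen; try lia.
  assert (r1 := Hr t1 ltac:(simpl; auto)).
  assert (r2 := Hr t2 ltac:(simpl; auto)).
  assert (r3 := Hr t3 ltac:(simpl; auto)).
  apply NoDup_cons_iff in Hnd as [n1 Hnd]; apply NoDup_cons_iff in Hnd as [n2 Hnd].
  assert (d12 : t1 <> t2) by (intro; subst; apply n1; simpl; auto).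
  assert (d13 : t1 <> t3) by (intro; subst; apply n1; simpl; auto).
  assert (d23 : t2 <> t3) by (intro; subst; apply n2; simpl; auto).
  assert (h12 : g1 + g2*(t1+t2) = 0) by (apply (cancel_diff t1 t2); auto; nra).
  assert (h13 : g1 + g2*(t1+t3) = 0) by (apply (cancel_diff t1 t3); auto; nra).
  assert (e2 : g2 = 0) by (apply (cancel_diff t2 t3); auto; nra).
  subst g2. assert (g1 = 0) by lra. subst g1. intro; nra.
Qed.

Lemma lin_roots g0 g1 (l : list R) : NoDup l -> (2 <= length l)%nat ->
  (forall t, List.In t l -> g0 + g1*t = 0) ->
  forall t, g0 + g1*t = 0.
Proof.
  intros Hnd Hlen Hr.
  destruct l as [|t1 [|t2 l]]; simpl in Hlen; try lia.
  assert (r1 := Hr t1 ltac:(simpl; auto)).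
  assert (r2 := Hr t2 ltac:(simpl; auto)).
  apply NoDup_cons_iff in Hnd as [n1 Hnd].
  assert (d12 : t1 <> t2) by (intro; subst; apply n1; simpl; auto).
  assert (e1 : g1 = 0) by (apply (cancel_diff t1 t2); auto; nra).
  subst g1. intro; nra.
Qed.

Definition qq (Cxx Cxy Cyx Cyy t : R) := Cxx + (Cxy + Cyx) * t + Cyy * t * t.
Definition LL (rx ry t : R) := rx + ry * t.
Definition FF (rx ry Cxx Cxy Cyx Cyy a beta mu t : R) :=
  ((rx*Cyx - ry*Cxx) + (rx*Cyy - ry*Cxy) * t) *
    (beta * qq Cxx Cxy Cyx Cyy t + mu * LL rx ry t * (1 + t))
  + a * LL rx ry t * qq Cxx Cxy Cyx Cyy t.

Lemma D_pos beta mu s : 0 <= beta -> 0 <= mu -> 0 < beta + mu -> 0 < s -> 0 < beta + mu * s.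
Proof.
  intros. destruct (Rtotal_order mu 0) as [Hx|[Hx|Hx]]; [lra| subst; lra|].
  assert (0 < mu * s) by (apply Rmult_lt_0_compat; auto). lra.
Qed.

Lemma fwd_core rx ry Cxx Cxy Cyx Cyy a beta mu u t :
  0 < u -> 0 < t -> 0 <= beta -> 0 <= mu -> 0 < beta + mu ->
  Pf rx Cxx Cxy a beta mu u (t*u) = 0 -> Qf ry Cyx Cyy a beta mu u (t*u) = 0 ->
  u * qq Cxx Cxy Cyx Cyy t = LL rx ry t /\ FF rx ry Cxx Cxy Cyx Cyy a beta mu t = 0.
Proof.
  intros Hu Ht Hb Hm Hbm HP HQ.
  set (D := beta + mu * (u + t*u)).
  assert (HD : 0 < D) by (apply D_pos; auto; nra).
  unfold Pf, Qf in HP, HQ. fold D in HP, HQ.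
  apply Rmult_integral in HP as [HP|HP]; [|lra].
  apply Rmult_integral in HQ as [HQ|HQ]; [|nra].
  set (lA := (rx - Cxx*u - Cxy*(t*u))*D + a*(t*u)).
  set (lB := (ry - Cyx*u - Cyy*(t*u))*D - a*u).
  assert (HA : lA = 0).
  { replace lA with (D * (rx - Cxx * u - Cxy * (t * u) + a / D * (t * u))) by (unfold lA; field; lra).
    rewrite HP; ring. }
  assert (HB : lB = 0).
  { replace lB with (D * (ry - Cyx * u - Cyy * (t * u) - a / D * u)) by (unfold lB; field; lra).
    rewrite HQ; ring. }
  assert (K1 : u * qq Cxx Cxy Cyx Cyy t = LL rx ry t).
  { assert (E : D * (u * (LL rx ry t - u * qq Cxx Cxy Cyx Cyy t)) = u * lA + t*u*lB)
      by (unfold lA, lB, LL, qq; ring).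
    rewrite HA, HB, Rmult_0_r, Rmult_0_r, Rplus_0_r in E.
    apply Rmult_integral in E as [E|E]; [lra|].
    apply Rmult_integral in E as [E|E]; lra. }
  split; auto.
  assert (Hrx : rx = u * qq Cxx Cxy Cyx Cyy t - ry * t) by (unfold LL in K1; lra).
  assert (E : t * FF rx ry Cxx Cxy Cyx Cyy a beta mu t = qq Cxx Cxy Cyx Cyy t * qq Cxx Cxy Cyx Cyy t * lA).
  { unfold lA, D, FF. rewrite <- K1. rewrite Hrx. unfold qq. ring. }
  rewrite HA, Rmult_0_r in E. apply Rmult_integral in E as [E|E]; lra.
Qed.

Lemma qq_pos Cxx Cxy Cyx Cyy t : 0 < Cxx -> 0 < Cxy -> 0 < Cyx -> 0 < Cyy -> 0 < t ->
  0 < qq Cxx Cxy Cyx Cyy t.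
Proof. intros. unfold qq. nra. Qed.

Lemma bwd_core rx ry Cxx Cxy Cyx Cyy a beta mu u t :
  0 < u -> 0 < t -> 0 <= beta -> 0 <= mu -> 0 < beta + mu ->
  0 < Cxx -> 0 < Cxy -> 0 < Cyx -> 0 < Cyy ->
  u * qq Cxx Cxy Cyx Cyy t = LL rx ry t -> FF rx ry Cxx Cxy Cyx Cyy a beta mu t = 0 ->
  Pf rx Cxx Cxy a beta mu u (t*u) = 0 /\ Qf ry Cyx Cyy a beta mu u (t*u) = 0.
Proof.
  intros Hu Ht Hb Hm Hbm H1 H2 H3 H4 K1 HF.
  set (D := beta + mu * (u + t*u)).
  assert (HD : 0 < D) by (apply D_pos; auto; nra).
  assert (Hq := qq_pos Cxx Cxy Cyx Cyy t H1 H2 H3 H4 Ht).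
  set (lA := (rx - Cxx*u - Cxy*(t*u))*D + a*(t*u)).
  set (lB := (ry - Cyx*u - Cyy*(t*u))*D - a*u).
  assert (Hrx : rx = u * qq Cxx Cxy Cyx Cyy t - ry * t) by (unfold LL in K1; lra).
  assert (E : t * FF rx ry Cxx Cxy Cyx Cyy a beta mu t = qq Cxx Cxy Cyx Cyy t * qq Cxx Cxy Cyx Cyy t * lA).
  { unfold lA, D, FF. rewrite <- K1. rewrite Hrx. unfold qq. ring. }
  rewrite HF in E.
  assert (HA : lA = 0).
  { assert (0 < qq Cxx Cxy Cyx Cyy t * qq Cxx Cxy Cyx Cyy t) by nra. nra. }
  assert (E2 : D * (u * (LL rx ry t - u * qq Cxx Cxy Cyx Cyy t)) = u * lA + t*u*lB)
      by (unfold lA, lB, LL, qq; ring).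
  rewrite K1, HA in E2.
  assert (HB : lB = 0) by (assert (0 < t*u) by nra; nra).
  unfold Pf, Qf; fold D. split.
  - replace (rx - Cxx * u - Cxy * (t * u) + a / D * (t * u)) with (lA / D) by (unfold lA; field; lra).
    rewrite HA; unfold Rdiv; ring.
  - replace (ry - Cyx * u - Cyy * (t * u) - a / D * u) with (lB / D) by (unfold lB; field; lra).
    rewrite HB; unfold Rdiv; ring.
Qed.

Lemma count (E : Ensemble (R*R)) (G : R -> R) (pt : R -> R*R) (k n : nat) :
  cardinal _ E n ->
  (forall p, Ensembles.In _ E p -> 0 < snd p / fst p /\ G (snd p / fst p) = 0 /\ p = pt (snd p / fst p)) ->
  (forall t, 0 < t -> G t = 0 -> Ensembles.In _ E (pt t)) ->
  (forall t1 t2, 0 < t1 -> 0 < t2 -> pt t1 = pt t2 -> t1 = t2) ->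
  (forall l, NoDup l -> (S k <= length l)%nat -> (forall t, List.In t l -> G t = 0) -> forall t, G t = 0) ->
  (n <= k)%nat.
Proof.
  intros Hc Hf Hb Hinj Hroot.
  destruct (le_lt_dec n k) as [|Hlt]; auto. exfalso.
  destruct (card_list E n Hc) as [lp [Hnd [Hlen Hin]]].
  set (r := fun p : R*R => snd p / fst p).
  assert (HG : forall t, G t = 0).
  { apply (Hroot (map r lp)).
    - apply map_inj_on; auto. intros x y Hx Hy Hxy.
      destruct (Hf x (Hin x Hx)) as [_ [_ Ex]]. destruct (Hf y (Hin y Hy)) as [_ [_ Ey]].
      rewrite Ex, Ey. unfold r in Hxy. rewrite Hxy. reflexivity.
    - rewrite length_map; lia.
    - intros t Ht. apply in_map_iff in Ht as [p [<- Hp]]. apply (Hf p (Hin p Hp)). }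
  set (lq := map (fun i => pt (INR (S i))) (seq 0 (S n))).
  assert (Hle : (length lq <= n)%nat).
  { apply (nodup_le_card lq E n Hc).
    - apply map_inj_on; [apply seq_NoDup|]. intros i j _ _ Hij.
      apply Hinj in Hij; try apply lt_0_INR; try lia. apply INR_eq in Hij. lia.
    - intros x Hx. apply in_map_iff in Hx as [i [<- _]]. apply Hb; auto. apply lt_0_INR; lia. }
  unfold lq in Hle. rewrite length_map, length_seq in Hle. lia.
Qed.

Definition pt rx ry Cxx Cxy Cyx Cyy (t : R) : R*R :=
  (LL rx ry t / qq Cxx Cxy Cyx Cyy t, t * (LL rx ry t / qq Cxx Cxy Cyx Cyy t)).

Theorem mainTheorem7 (rx ry Cxx Cxy Cyx Cyy a beta mu : R)
  (hrx : 0 < rx) (hry : 0 < ry)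
  (hCxx : 0 < Cxx) (hCxy : 0 < Cxy) (hCyx : 0 < Cyx) (hCyy : 0 < Cyy)
  (hbeta : 0 <= beta) (hmu : 0 <= mu) (hbm : 0 < beta + mu) :
  let S := stationary_set rx ry Cxx Cxy Cyx Cyy a beta mu in
  ~ Finite (R * R) S \/
  (Finite (R * R) S /\
   (beta <> 0 -> mu <> 0 -> forall n, cardinal (R * R) S n -> (n <= 3)%nat) /\
   (beta = 0 -> mu = 1 -> forall n, cardinal (R * R) S n -> (n <= 2)%nat) /\
   (beta = 1 -> mu = 0 -> forall n, cardinal (R * R) S n -> (n <= 1)%nat)).
Proof.
  intro S.
  set (F := FF rx ry Cxx Cxy Cyx Cyy a beta mu).
  set (P := pt rx ry Cxx Cxy Cyx Cyy).
  assert (Hfwd : forall p, Ensembles.In _ S p ->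
            0 < snd p / fst p /\ F (snd p / fst p) = 0 /\ p = P (snd p / fst p)).
  { intros [u v] [Hu [Hv [HP HQ]]]. simpl in *.
    set (t := v / u).
    assert (Ht : 0 < t) by (unfold t; apply Rdiv_lt_0_compat; auto).
    assert (Hv' : v = t * u) by (unfold t; field; lra).
    rewrite Hv' in HP, HQ.
    destruct (fwd_core rx ry Cxx Cxy Cyx Cyy a beta mu u t Hu Ht hbeta hmu hbm HP HQ) as [K1 K2].
    split; auto. split; auto.
    assert (Hq := qq_pos Cxx Cxy Cyx Cyy t hCxx hCxy hCyx hCyy Ht).
    unfold P, pt. rewrite <- K1.
    replace (u * qq Cxx Cxy Cyx Cyy t / qq Cxx Cxy Cyx Cyy t) with u by (field; lra).
    rewrite <- Hv'. reflexivity. }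
  assert (Hbwd : forall t, 0 < t -> F t = 0 -> Ensembles.In _ S (P t)).
  { intros t Ht HF.
    assert (Hq := qq_pos Cxx Cxy Cyx Cyy t hCxx hCxy hCyx hCyy Ht).
    set (u := LL rx ry t / qq Cxx Cxy Cyx Cyy t).
    assert (Hu : 0 < u) by (unfold u, LL; apply Rdiv_lt_0_compat; nra).
    assert (K1 : u * qq Cxx Cxy Cyx Cyy t = LL rx ry t) by (unfold u; field; lra).
    destruct (bwd_core rx ry Cxx Cxy Cyx Cyy a beta mu u t Hu Ht hbeta hmu hbm
               hCxx hCxy hCyx hCyy K1 HF) as [HP HQ].
    unfold P, pt; fold u. repeat split; simpl; auto. nra. }
  assert (Hinj : forall t1 t2, 0 < t1 -> 0 < t2 -> P t1 = P t2 -> t1 = t2).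
  { assert (R1 : forall t, 0 < t -> snd (P t) / fst (P t) = t).
    { intros t Ht. assert (Hq := qq_pos Cxx Cxy Cyx Cyy t hCxx hCxy hCyx hCyy Ht).
      unfold P, pt, LL; simpl. field. split; [lra|]. nra. }
    intros t1 t2 H1 H2 E. rewrite <- (R1 t1 H1), <- (R1 t2 H2), E. reflexivity. }
  set (c0 := rx*Cyx - ry*Cxx). set (c1 := rx*Cyy - ry*Cxy).
  destruct (classic (Finite (R*R) S)) as [Hfin|Hnf]; [right|left; auto].
  split; [auto|]. split; [|split].
  - intros _ _ n Hc.
    set (m0 := beta*Cxx + mu*rx). set (m1 := beta*(Cxy+Cyx) + mu*(rx+ry)).
    set (m2 := beta*Cyy + mu*ry). set (s := Cxy + Cyx).
    assert (Feq : forall t, F t = (c0*m0 + a*rx*Cxx) + (c0*m1 + c1*m0 + a*(rx*s + ry*Cxx))*t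
              + (c0*m2 + c1*m1 + a*(rx*Cyy + ry*s))*t*t + (c1*m2 + a*ry*Cyy)*t*t*t).
    { intro t. unfold F, FF, c0, c1, m0, m1, m2, s, qq, LL. ring. }
    apply (count S F P 3 n Hc Hfwd Hbwd Hinj).
    intros l Hnd Hlen Hr t. rewrite Feq. apply (cubic_roots _ _ _ _ l Hnd Hlen).
    intros x Hx. rewrite <- Feq. auto.
  - intros Hb Hm n Hc.
    set (G := fun t => (c0 + a*Cxx) + (c0 + c1 + a*(Cxy+Cyx))*t + (c1 + a*Cyy)*t*t).
    assert (Feq : forall t, F t = LL rx ry t * G t).
    { intro t. unfold F, FF, G, c0, c1, qq, LL. rewrite Hb, Hm. ring. }
    apply (count S G P 2 n Hc).
    + intros p Hp. destruct (Hfwd p Hp) as [H1 [H2 H3]]. repeat split; auto.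
      rewrite Feq in H2. apply Rmult_integral in H2 as [H2|H2]; auto.
      unfold LL in H2. nra.
    + intros t Ht HG. apply Hbwd; auto. rewrite Feq, HG; ring.
    + auto.
    + intros l Hnd Hlen Hr t. apply (quad_roots _ _ _ l Hnd Hlen). exact Hr.
  - intros Hb Hm n Hc.
    set (G := fun t => (c0 + a*rx) + (c1 + a*ry)*t).
    assert (Feq : forall t, F t = qq Cxx Cxy Cyx Cyy t * G t).
    { intro t. unfold F, FF, G, c0, c1, qq, LL. rewrite Hb, Hm. ring. }
    apply (count S G P 1 n Hc).
    + intros p Hp. destruct (Hfwd p Hp) as [H1 [H2 H3]]. repeat split; auto.
      rewrite Feq in H2. apply Rmult_integral in H2 as [H2|H2]; auto.
      pose proof (qq_pos Cxx Cxy Cyx Cyy _ hCxx hCxy hCyx hCyy H1). lra.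
    + intros t Ht HG. apply Hbwd; auto. rewrite Feq, HG; ring.
    + auto.
    + intros l Hnd Hlen Hr t. apply (lin_roots _ _ l Hnd Hlen). exact Hr.
Qed.
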